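(* Let $\Gamma$ be an extended Coxeter diagram with all vertex labels $p_i$ finite. If the Shephard group $G_\Gamma$ is finite, then the Hermitian form $H_\Gamma$ is positive definite.
   Context: An extended Coxeter diagram $\Gamma$ is a finite simplicial graph with vertex set $I$, labels $p_i\in\mathbb{Z}_{\ge2}\cup\{\infty\}$ on vertices and $m_{ij}\in\mathbb{Z}_{\ge3}\cup\{\infty\}$ on edges ($m_{ij}=2$ for non-edges, and $p_i=p_j$ whenever $m_{ij}$ is odd). $G_\Gamma=\langle s_i, i\in I\mid \mathrm{prod}(s_i,s_j;m_{ij})=\mathrm{prod}(s_j,s_i;m_{ij}),\ s_i^{p_i}=1\rangle$, with $\mathrm{prod}(a,b;m)$ the alternating word $aba\cdots$ of length $m$ (relations with $\infty$ omitted). For distinct $i,j$ joined by an edge set $\alpha_{ij}=-\left(\frac{\cos(\pi/p_i-\pi/p_j)+\cos(2\pi/m_{ij})}{2\sin(\pi/p_i)\sin(\pi/p_j)}\right)^{1/2}$; set $\alpha_{ii}=1$ and $\alpha_{ij}=0$ if $i\ne j$ are not joined by an edge. $H_\Gamma$ is the Hermitian form on $\mathbb{C}^I$ with basis $\{e_i\}$ given by $H_\Gamma(e_i,e_j)=\alpha_{ij}$. *)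

(* Defs.v *)
From HB Require Import structures.
From mathcomp Require Import all_boot all_order all_algebra.
From mathcomp Require Import all_classical all_reals all_analysis.
From mathcomp Require Import complex.
Set Implicit Arguments. Unset Strict Implicit. Unset Printing Implicit Defensive.
Import Order.TTheory GRing.Theory Num.Theory.
Local Open Scope ring_scope.

(* Vertex set I (a finite type); simple graph given by a symmetric
   irreflexive edge relation e; vertex labels p i (all finite, >= 2);
   edge labels m i j : option nat, where None stands for infinity.  *)
Record ext_coxeter_diagram (I : finType) (e : rel I)
    (p : I -> nat) (m : I -> I -> option nat) : Prop := {
  ecd_irrefl : forall i, ~~ e i i;
  ecd_sym : forall i j, e i j = e j i;
  ecd_msym : forall i j, e i j -> m i j = m j i;
  ecd_mge3 : forall i j k, e i j -> m i j = Some k -> (3 <= k)%N;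
  ecd_p : forall i, (2 <= p i)%N;
  ecd_odd : forall i j k, e i j -> m i j = Some k -> odd k -> p i = p j
}.

Definition mlab (I : finType) (e : rel I) (m : I -> I -> option nat) (i j : I)
  : option nat := if e i j then m i j else Some 2%N.

(* Words in the generators: (i, true) = s_i, (i, false) = s_i^-1. *)
Definition letter (I : finType) := (I * bool)%type.
Definition word (I : finType) := seq (letter I).

Definition prodw (I : finType) (i j : I) (k : nat) : word I :=
  mkseq (fun t => if odd t then (j, true) else (i, true)) k.

Inductive shep_basic (I : finType) (e : rel I) (p : I -> nat)
    (m : I -> I -> option nat) : word I -> word I -> Prop :=
| sb_free i b : shep_basic e p m [:: (i, b); (i, ~~ b)] [::]
| sb_pow i : shep_basic e p m (nseq (p i) (i, true)) [::]
| sb_braid i j k : i != j -> mlab e m i j = Some k ->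
    shep_basic e p m (prodw i j k) (prodw j i k).

(* the congruence on words generated by the relations: two words are
   equivalent iff they represent the same element of G_Gamma *)
Inductive shep_eq (I : finType) (e : rel I) (p : I -> nat)
    (m : I -> I -> option nat) : word I -> word I -> Prop :=
| se_refl w : shep_eq e p m w w
| se_sym w1 w2 : shep_eq e p m w1 w2 -> shep_eq e p m w2 w1
| se_trans w1 w2 w3 : shep_eq e p m w1 w2 -> shep_eq e p m w2 w3 ->
    shep_eq e p m w1 w3
| se_ctx u v x y : shep_basic e p m x y ->
    shep_eq e p m (u ++ x ++ v) (u ++ y ++ v).

Definition shephard_finite (I : finType) (e : rel I) (p : I -> nat)
    (m : I -> I -> option nat) : Prop :=
  exists ws : seq (word I), forall w : word I,
    exists2 w', w' \in ws & shep_eq e p m w w'.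

(* cos(2 pi / m), with cos(2 pi / infinity) = cos 0 = 1 *)
Definition cos2pim (R : realType) (k : option nat) : R :=
  match k with Some k => cos (2 * pi / k%:R) | None => 1 end.

Definition alpha (R : realType) (I : finType) (e : rel I) (p : I -> nat)
    (m : I -> I -> option nat) (i j : I) : R :=
  if i == j then 1
  else if e i j then
    - Num.sqrt ((cos (pi / (p i)%:R - pi / (p j)%:R) + @cos2pim R (m i j))
                / (2 * sin (pi / (p i)%:R) * sin (pi / (p j)%:R)))
  else 0.

Definition herm_form (R : realType) (I : finType) (e : rel I) (p : I -> nat)
    (m : I -> I -> option nat) (z : I -> R[i]) : R[i] :=
  \sum_(i : I) \sum_(j : I) (z i)^* * ((@alpha R I e p m i j)%:C)%C * z j.

Definition herm_pos_def (R : realType) (I : finType) (e : rel I)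
    (p : I -> nat) (m : I -> I -> option nat) : Prop :=
  forall z : I -> R[i], (exists i, z i != 0) -> 0 < @herm_form R I e p m z.

(* Main.v *)
Require Import Defs.
From HB Require Import structures.
From mathcomp Require Import all_boot all_order all_algebra.
From mathcomp Require Import all_classical all_reals all_analysis.
From mathcomp Require Import complex.
From mathcomp Require Import ring lra.
Set Implicit Arguments. Unset Strict Implicit. Unset Printing Implicit Defensive.
Import Order.TTheory GRing.Theory Num.Theory.
Local Open Scope ring_scope.

Section TrigC.
Variable R : realType.
Local Notation C := R[i].

Definition expi (t : R) : C := (cos t +i* sin t)%C.
Local Notation RC x := (real_complex R x).

Lemma expiD a b : expi (a + b) = expi a * expi b.
Proof.
rewrite /expi sinD cosD; apply/eqP; rewrite eq_complex /=; apply/andP; split; apply/eqP.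
  by [].
by rewrite addrC.
Qed.

Lemma expi0 : expi 0 = 1.
Proof. by rewrite /expi sin0 cos0. Qed.

Lemma expiMn t k : expi t ^+ k = expi (t *+ k).
Proof.
elim: k => [|k IH]; first by rewrite expr0 mulr0n expi0.
by rewrite exprS IH -expiD mulrS.
Qed.

Lemma expi2pi : expi (pi *+ 2) = 1.
Proof. by rewrite /expi cos2pi sin2pi. Qed.

Lemma expi_neq0 t : expi t != 0.
Proof.
apply/negP => /eqP H.
have := cos2Dsin2 t.
move: H; rewrite /expi => -[-> ->]; rewrite expr0n /= addr0 => /eqP; by rewrite eq_sym oner_eq0.
Qed.

Lemma expiE t : expi t = RC (cos t) + 'i * RC (sin t).
Proof. by rewrite {1}[expi t]complexE. Qed.



Lemma RC_sqr_sum t : RC (cos t) ^+ 2 + RC (sin t) ^+ 2 = 1.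
Proof. by rewrite -!rmorphXn -rmorphD cos2Dsin2. Qed.

Lemma expi_sqr_sub1 t : expi t ^+ 2 - 1 = 2%:R * 'i * RC (sin t) * expi t.
Proof.
rewrite expiE.
have hi : 'i ^+ 2 = -1 :> C := @sqrCi _. have hcs := RC_sqr_sum t.
set c := RC (cos t) in hcs *; set s := RC (sin t) in hcs *.
apply/eqP; rewrite -subr_eq0; apply/eqP.
transitivity ((c^+2 + s^+2 - 1) - s^+2 * ('i ^+ 2 + 1)); first by ring.
by rewrite hcs hi; ring.
Qed.

Lemma expi_add_opp x : expi x + expi (- x) = RC (2%:R * cos x).
Proof.
rewrite /expi cosN sinN; apply/eqP; rewrite eq_complex /=; apply/andP; split; apply/eqP.
  by rewrite mulr_natl mulr2n.
by rewrite subrr.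
Qed.

Lemma expi_sqr_add a b :
  expi a ^+ 2 + expi b ^+ 2 = expi a * expi b * RC (2%:R * cos (a - b)).
Proof.
rewrite -expi_add_opp mulrDr -!expiD !expr2 -!expiD; congr (expi _ + expi _); lra.
Qed.

End TrigC.

Fixpoint chp (K : pzRingType) (t d : K) (n : nat) : K * K :=
  match n with 0 => (0, 1) | n'.+1 => let q := chp t d n' in (q.2, t * q.2 - d * q.1) end.
Definition cheb (K : pzRingType) (t d : K) n := (chp t d n).1.

Lemma cheb0 (K : pzRingType) (t d : K) : cheb t d 0 = 0. Proof. by []. Qed.
Lemma cheb1 (K : pzRingType) (t d : K) : cheb t d 1 = 1. Proof. by []. Qed.
Lemma chebSS (K : pzRingType) (t d : K) n :
  cheb t d n.+2 = t * cheb t d n.+1 - d * cheb t d n.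
Proof. by []. Qed.

Lemma cheb_scale (K : comPzRingType) (w t : K) s :
  cheb (w * t) (w ^+ 2) s * w = w ^+ s * cheb t 1 s.
Proof.
suff : cheb (w * t) (w ^+ 2) s * w = w ^+ s * cheb t 1 s /\
       cheb (w * t) (w ^+ 2) s.+1 * w = w ^+ s.+1 * cheb t 1 s.+1 by case.
elim: s => [|s [IH1 IH2]]; first by rewrite cheb0 cheb1 mul0r expr0 mulr0 mul1r expr1 mulr1.
split => //.
rewrite !chebSS.
transitivity (w * t * (cheb (w * t) (w ^+ 2) s.+1 * w) - w ^+ 2 * (cheb (w * t) (w ^+ 2) s * w)); first by ring.
rewrite IH1 IH2 !exprS; ring.
Qed.

Lemma cheb_rmorph (K L : pzRingType) (f : {rmorphism K -> L}) (t : K) s :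
  f (cheb t 1 s) = cheb (f t) 1 s.
Proof.
suff : f (cheb t 1 s) = cheb (f t) 1 s /\ f (cheb t 1 s.+1) = cheb (f t) 1 s.+1 by case.
elim: s => [|s [IH1 IH2]]; first by rewrite cheb0 cheb1 rmorph0 rmorph1.
split => //.
by rewrite !chebSS rmorphB !rmorphM rmorph1 IH1 IH2.
Qed.

Lemma cheb_sin (R : realType) (phi : R) s :
  sin phi * cheb (- (2%:R * cos phi)) 1 s = (-1) ^+ s.+1 * sin (phi *+ s).
Proof.
suff : sin phi * cheb (- (2%:R * cos phi)) 1 s = (-1) ^+ s.+1 * sin (phi *+ s) /\
  sin phi * cheb (- (2%:R * cos phi)) 1 s.+1 = (-1) ^+ s.+2 * sin (phi *+ s.+1) by case.
elim: s => [|s [IH1 IH2]].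
  by rewrite cheb0 cheb1 mulr0n sin0 !mulr0 mulr1 mulr1n expr2 mulrNN mulr1 mul1r.
split => //.
rewrite chebSS mulrBr mulrCA IH2 mul1r IH1.
have -> : sin (phi *+ s.+2) = 2%:R * cos phi * sin (phi *+ s.+1) - sin (phi *+ s).
  have E1 : phi *+ s.+2 = phi *+ s.+1 + phi by rewrite mulrSr.
  have E2 : phi *+ s = phi *+ s.+1 - phi by rewrite mulrSr addrK.
  by rewrite E1 E2 sinD sinB; ring.
rewrite !exprS; ring.
Qed.


Section Refl.
Variable R : realType.
Local Notation C := R[i].
Local Notation RC x := (real_complex R x).
Variable n : nat.
Variable al : 'I_n -> 'I_n -> R.
Variable ze : 'I_n -> C.
Hypothesis al_diag : forall a, al a a = 1.
Hypothesis al_sym : forall a b, al a b = al b a.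

Definition Gm : 'M[C]_n := \matrix_(a, b) RC (al a b).
Definition ev a : 'cV[C]_n := delta_mx a 0.
Definition rowG a : 'rV[C]_n := delta_mx 0 a *m Gm.
Fact refl_key : unit. Proof. exact: tt. Qed.
Definition refl : 'I_n -> 'M[C]_n :=
  locked_with refl_key (fun a => 1%:M + (ze a - 1) *: (ev a *m rowG a)).
Lemma reflD a : refl a = 1%:M + (ze a - 1) *: (ev a *m rowG a).
Proof. by rewrite /refl unlock. Qed.
Definition phi a (v : 'cV[C]_n) : C := (rowG a *m v) 0 0.

Lemma reflE a v : refl a *m v = v + ((ze a - 1) * phi a v) *: ev a.
Proof.
rewrite reflD mulmxDl mul1mx -scalemxAl -mulmxA [rowG a *m v]mx11_scalar.
by rewrite mul_mx_scalar scalerA.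
Qed.

Lemma phi_ev a b : phi a (ev b) = RC (al a b).
Proof. by rewrite /phi /rowG /ev -rowE -colE !mxE. Qed.

Lemma phiD a v w : phi a (v + w) = phi a v + phi a w.
Proof. by rewrite /phi mulmxDr mxE. Qed.

Lemma phiZ a c v : phi a (c *: v) = c * phi a v.
Proof. by rewrite /phi -scalemxAr mxE. Qed.

Lemma phi_sum a h (F : nat -> 'cV[C]_n) :
  phi a (\sum_(s < h) F s) = \sum_(s < h) phi a (F s).
Proof. by rewrite /phi mulmx_sumr summxE. Qed.

Definition lc a b (c1 c2 : C) : 'cV[C]_n := c1 *: ev a + c2 *: ev b.

Lemma phi_lc a b c1 c2 : phi a (lc a b c1 c2) = c1 + c2 * RC (al a b).
Proof. by rewrite /lc phiD !phiZ !phi_ev al_diag mulr1. Qed.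

Lemma phi_lc2 a b c1 c2 : phi b (lc a b c1 c2) = c1 * RC (al a b) + c2.
Proof. by rewrite /lc phiD !phiZ !phi_ev al_diag mulr1 al_sym. Qed.

Lemma lc10 a b : lc a b 1 0 = ev a.
Proof. by rewrite /lc scale0r addr0 scale1r. Qed.

Lemma refl_lc_a a b c1 c2 :
  refl a *m lc a b c1 c2 = lc a b (ze a * c1 + (ze a - 1) * RC (al a b) * c2) c2.
Proof.
rewrite reflE phi_lc /lc; apply/matrixP => i j; rewrite !mxE; ring.
Qed.

Lemma refl_lc_b a b c1 c2 :
  refl b *m lc a b c1 c2 = lc a b c1 ((ze b - 1) * RC (al a b) * c1 + ze b * c2).
Proof.
rewrite reflE phi_lc2 /lc; apply/matrixP => i j; rewrite !mxE; ring.
Qed.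


Definition tau a b := ze a + ze b + (ze a - 1) * (ze b - 1) * RC (al a b) ^+ 2.
Definition dlt a b := ze a * ze b.
Definition Mop a b (v : 'cV[C]_n) := refl a *m (refl b *m v).
Local Notation U a b := (cheb (tau a b) (dlt a b)).

Definition Mit a b s := iter s (Mop a b) (ev a).

Lemma Mpow a b s :
  Mit a b s =
  lc a b (U a b s.+1 - ze b * U a b s) ((ze b - 1) * RC (al a b) * U a b s).
Proof.
rewrite /Mit; elim: s => [|s IH].
  by rewrite /= cheb0 cheb1 !mulr0 subr0 lc10.
rewrite iterS IH /Mop (chebSS _ _ s).
move: (U a b s.+1) (U a b s) => u1 u0.
rewrite refl_lc_b refl_lc_a /tau /dlt.
move: (ze a) (ze b) (RC (al a b)) => x y z.
congr lc; ring.
Qed.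

Fixpoint YZ (a b : 'I_n) t : 'cV[C]_n * 'cV[C]_n :=
  match t with
  | 0 => (0, 0)
  | t'.+1 => let q := YZ b a t' in (ev a + refl a *m q.2, refl a *m q.1)
  end.

Fixpoint alt (a b : 'I_n) t : 'M[C]_n :=
  match t with 0 => 1%:M | t'.+1 => refl a *m alt b a t' end.

Lemma addr_perm3 (V : zmodType) (o x b c : V) : o + x + b + c = o + (x + c) + b.
Proof. by rewrite -!addrA (addrC b). Qed.

Lemma alt_YZ a b t :
  alt a b t = 1%:M + (ze a - 1) *: ((YZ a b t).1 *m rowG a)
                   + (ze b - 1) *: ((YZ a b t).2 *m rowG b).
Proof.
elim: t a b => [|t IH] a b /=.
  by rewrite !mul0mx !scaler0 !addr0.
rewrite IH; move: (YZ b a t).1 (YZ b a t).2 => Y Z.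
move: (refl a) (reflD a) => r Hr.
rewrite !mulmxDr mulmx1 -!scalemxAr !mulmxA {1}Hr /rowG !mulmxA !mulmxDl !scalerDr.
by apply: addr_perm3.
Qed.

Definition Ssum a b h := \sum_(s < h) Mit a b s.

Lemma SsumS a b h : Ssum a b h.+1 = ev a + refl a *m (refl b *m Ssum a b h).
Proof.
rewrite /Ssum big_ord_recl /= !mulmx_sumr; congr (_ + _).
Qed.

Lemma YZ_even a b h :
  (YZ a b h.*2).1 = Ssum a b h /\ (YZ b a h.*2).2 = refl b *m Ssum a b h.
Proof.
elim: h => [|h [IH1 IH2]].
  by rewrite /Ssum /= big_ord0 mulmx0.
rewrite doubleS /=; split.
  by rewrite IH1 SsumS.
by rewrite IH2 SsumS.
Qed.

Lemma YZ_odd a b h :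
  (YZ a b h.*2.+1).1 = Ssum a b h.+1 /\ (YZ b a h.*2.+1).2 = refl b *m Ssum a b h.
Proof.
have [E1 E2] := YZ_even a b h.
by rewrite /= E1 E2 SsumS.
Qed.

Lemma phi_Ssum a b h : phi b (Ssum a b h) = RC (al a b) * U a b h.
Proof.
rewrite /Ssum phi_sum.
under eq_bigr do rewrite Mpow phi_lc2.
elim: h => [|h IH]; first by rewrite big_ord0 cheb0 mulr0.
rewrite big_ord_recr /= IH.
move: (U a b h.+1) (U a b h) (ze b) (RC (al a b)) => u1 u0 y z.
ring.
Qed.

Lemma half_even a b h : RC (al a b) * U a b h = 0 ->
  (YZ a b h.*2).1 = (YZ b a h.*2).2.
Proof.
move=> H; have [E1 E2] := YZ_even a b h.
by rewrite E1 E2 reflE phi_Ssum H mulr0 scale0r addr0.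
Qed.

Lemma half_odd a b h : U a b h.+1 = ze b * U a b h ->
  (YZ a b h.*2.+1).1 = (YZ b a h.*2.+1).2.
Proof.
move=> H; have [E1 E2] := YZ_odd a b h.
rewrite E1 E2 reflE phi_Ssum /Ssum big_ord_recr /= Mpow H subrr.
by rewrite /lc scale0r add0r mulrA.
Qed.

Lemma braid_even a b h :
  RC (al a b) * U a b h = 0 -> RC (al b a) * U b a h = 0 ->
  alt a b h.*2 = alt b a h.*2.
Proof.
move=> H1 H2; rewrite !alt_YZ (half_even H1) -(half_even H2).
exact: addrAC.
Qed.

Lemma braid_odd a b h :
  U a b h.+1 = ze b * U a b h -> U b a h.+1 = ze a * U b a h ->
  alt a b h.*2.+1 = alt b a h.*2.+1.
Proof.
move=> H1 H2; rewrite !alt_YZ (half_odd H1) -(half_odd H2).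
exact: addrAC.
Qed.

End Refl.

Section TrigCore.
Variable R : realType.
Local Notation C := R[i].
Local Notation RC x := (real_complex R x).

Lemma zeta_sub1_neq0 (a : R) : 0 < sin a -> expi a ^+ 2 - 1 != 0.
Proof.
move=> sa; rewrite expi_sqr_sub1 !mulf_neq0 ?expi_neq0 ?neq0Ci //.
by rewrite -(rmorph0 (real_complex R)) (inj_eq (@complexI R)) gt_eqF.
Qed.

Lemma tau_formula (a b c A : R) :
  A ^+ 2 * (2%:R * sin a * sin b) = cos (a - b) + c ->
  expi a ^+ 2 + expi b ^+ 2 + (expi a ^+ 2 - 1) * (expi b ^+ 2 - 1) * RC A ^+ 2
  = expi a * expi b * RC (- (2%:R * c)).
Proof.
move=> H.
rewrite expi_sqr_add !expi_sqr_sub1.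
have hi : 'i ^+ 2 = -1 :> C := @sqrCi _.
transitivity (expi a * expi b *
   (RC (2%:R * cos (a - b)) + 4%:R * 'i ^+ 2 * RC (sin a) * RC (sin b) * RC A ^+ 2)).
  by ring.
rewrite hi; congr (_ * _).
have -> : RC (2%:R * cos (a - b)) + 4%:R * (-1) * RC (sin a) * RC (sin b) * RC A ^+ 2
   = RC (2%:R * cos (a - b) - 4%:R * sin a * sin b * A ^+ 2).
  by rewrite rmorphB !rmorphM ?rmorphXn !rmorph_nat; ring.
congr (RC _).
have -> : 4%:R * sin a * sin b * A ^+ 2 = 2%:R * (A ^+ 2 * (2%:R * sin a * sin b)) by ring.
rewrite H; ring.
Qed.

Lemma cheb_expi (w : C) (c : R) s :
  cheb (w * RC (- (2%:R * c))) (w ^+ 2) s * w = w ^+ s * RC (cheb (- (2%:R * c)) 1 s).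
Proof. by rewrite cheb_scale cheb_rmorph. Qed.

End TrigCore.

Section Main.
Variables (R : realType) (I : finType) (e : rel I) (p : I -> nat) (m : I -> I -> option nat).
Hypothesis HD : ext_coxeter_diagram e p m.
Local Notation C := R[i].
Local Notation RC x := (real_complex R x).
Local Notation n := #|I|.

Definition ang (i : I) : R := pi / (p i)%:R.
Definition zeta (i : I) : C := expi (ang i) ^+ 2.
Definition alI (a b : 'I_n) : R := alpha R e p m (enum_val a) (enum_val b).
Definition zeI (a : 'I_n) : C := zeta (enum_val a).

Lemma p_gt0 i : (0 < p i)%N.
Proof. by have := ecd_p HD i; case: (p i). Qed.

Lemma p_gt0R i : 0 < (p i)%:R :> R.
Proof. by rewrite ltr0n p_gt0. Qed.

Lemma ang_gt0 i : 0 < ang i.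
Proof. by rewrite /ang divr_gt0 ?pi_gt0 ?p_gt0R. Qed.

Lemma ang_le i : ang i <= pi / 2%:R.
Proof.
have hp : 2%:R <= (p i)%:R :> R by rewrite ler_nat; exact: ecd_p HD i.
have := pi_gt0 R => hpi.
rewrite /ang ler_pdivrMr ?p_gt0R //; nra.
Qed.

Lemma sin_ang_gt0 i : 0 < sin (ang i).
Proof.
apply: sin_gt0_pi; rewrite ang_gt0 /=.
apply: (le_lt_trans (ang_le i)); have := pi_gt0 R; lra.
Qed.

Lemma alpha_sym i j : alpha R e p m i j = alpha R e p m j i.
Proof.
rewrite /alpha eq_sym (ecd_sym HD i j).
case: eqP => // _; case E: (e j i) => //.
rewrite (ecd_msym HD E).
have -> : cos (pi / (p j)%:R - pi / (p i)%:R : R) = cos (pi / (p i)%:R - pi / (p j)%:R).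
  by rewrite -opprB cosN.
by rewrite [2%:R * sin (pi / (p j)%:R) * _]mulrAC.
Qed.

Lemma alpha_diag i : alpha R e p m i i = 1.
Proof. by rewrite /alpha eqxx. Qed.

Lemma phi_k_sin_gt0 (k : nat) : (2 < k)%N -> 0 < sin (2%:R * pi / k%:R :> R).
Proof.
move=> k2; have k0 : 0 < k%:R :> R by rewrite ltr0n; apply: leq_trans k2.
apply: sin_gt0_pi; rewrite divr_gt0 ?mulr_gt0 ?pi_gt0 ?ltr0n //=.
have hk : 3%:R <= k%:R :> R by rewrite ler_nat.
have := pi_gt0 R => hpi.
rewrite ltr_pdivrMr //; first nra.
by apply: leq_trans k2.
Qed.


Lemma phi_even (h : nat) : (0 < h)%N -> (2%:R * pi / (h.*2)%:R) *+ h = pi :> R.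
Proof.
move=> h0; have hR : h%:R != 0 :> R by rewrite pnatr_eq0 -lt0n.
rewrite -mulr_natr -muln2 natrM; field; exact: hR.
Qed.

Lemma phi_odd (h : nat) :
  (2%:R * pi / (h.*2.+1)%:R) *+ h.+1 = pi *+ 2 - (2%:R * pi / (h.*2.+1)%:R) *+ h :> R.
Proof.
have hR : (h.*2.+1)%:R != 0 :> R by rewrite pnatr_eq0.
set f := 2%:R * pi / (h.*2.+1)%:R.
rewrite -(mulr_natr f h.+1) -(mulr_natr f h) -(mulr_natr pi 2) /f.
rewrite -addn1 -muln2 natrD natrM in hR *.
rewrite -addn1 natrD.
field; exact: hR.
Qed.

Lemma sin_2piB (x : R) : sin (pi *+ 2 - x) = - sin x.
Proof. by rewrite sinB sin2pi cos2pi mul0r mul1r sub0r. Qed.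

Lemma edge_r_nonneg i j k : e i j -> m i j = Some k ->
  0 <= cos (ang i - ang j) + cos (2%:R * pi / k%:R).
Proof.
move=> Eij Hk; have k3 := ecd_mge3 HD Eij Hk.
case: (boolP (odd k)) => ok.
  have -> : ang i = ang j by rewrite /ang (ecd_odd HD Eij Hk ok).
  by rewrite subrr cos0; have := cos_geN1 (2%:R * pi / k%:R :> R); lra.
have k4 : (4 <= k)%N.
  by move: k3 ok; case: k Hk => [|[|[|[|k]]]].
have hk : 4%:R <= k%:R :> R by rewrite ler_nat.
have k0 : 0 < k%:R :> R by apply: lt_le_trans hk; rewrite ltr0n.
have := pi_gt0 R => hpi.
apply: addr_ge0; apply: cos_ge0_pihalf.
  have := ang_gt0 i; have := ang_gt0 j; have := ang_le i; have := ang_le j; lra.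
have h1 : 0 <= 2%:R * pi / k%:R :> R by rewrite divr_ge0 ?mulr_ge0 ?ler0n ?pi_ge0 // ltW.
have h2 : 2%:R * pi / k%:R <= pi / 2%:R :> R.
  by rewrite ler_pdivrMr // mulrAC ler_pdivlMr ?ltr0n //; nra.
lra.
Qed.

Lemma alpha_sq i j k : i != j -> e i j -> m i j = Some k ->
  alpha R e p m i j ^+ 2 * (2%:R * sin (ang i) * sin (ang j)) =
  cos (ang i - ang j) + cos (2%:R * pi / k%:R).
Proof.
move=> ij Eij Hk.
have den : 0 < 2%:R * sin (ang i) * sin (ang j) :> R.
  by rewrite !mulr_gt0 ?ltr0n ?sin_ang_gt0.
rewrite /alpha (negbTE ij) Eij Hk /= sqrrN sqr_sqrtr.
  by rewrite divfK // gt_eqF.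
by rewrite divr_ge0 ?(ltW den) // (edge_r_nonneg Eij Hk).
Qed.

Local Notation Ucheb a b := (cheb (tau alI zeI a b) (dlt zeI a b)).

Lemma braid_cond i j k : i != j -> mlab e m i j = Some k ->
  if odd k then
    Ucheb (enum_rank i) (enum_rank j) (k./2).+1 =
      zeI (enum_rank j) * Ucheb (enum_rank i) (enum_rank j) k./2
  else RC (alI (enum_rank i) (enum_rank j)) * Ucheb (enum_rank i) (enum_rank j) k./2 = 0.
Proof.
move=> ij; rewrite /mlab; case Eij: (e i j) => Hk; last first.
  case: Hk => <- /=.
  by rewrite /alI !enum_rankK /alpha (negbTE ij) Eij rmorph0 mul0r.
have k3 := ecd_mge3 HD Eij Hk.
have Hsq := alpha_sq ij Eij Hk.
set phi := 2%:R * pi / k%:R : R.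
have Htau : tau alI zeI (enum_rank i) (enum_rank j) =
    (expi (ang i) * expi (ang j)) * RC (- (2%:R * cos phi)).
  by rewrite /tau /alI /zeI !enum_rankK /zeta; exact: tau_formula Hsq.
have Hdlt : dlt zeI (enum_rank i) (enum_rank j) = (expi (ang i) * expi (ang j)) ^+ 2.
  by rewrite /dlt /zeI !enum_rankK /zeta exprMn.
rewrite Htau Hdlt.
set w := expi (ang i) * expi (ang j).
have w0 : w != 0 by rewrite mulf_neq0 ?expi_neq0.
have HU := cheb_expi w (cos phi).
have sphi : sin phi != 0 by rewrite gt_eqF // phi_k_sin_gt0.
have HS := cheb_sin phi.
case: (boolP (odd k)) => ok.
  have Hk2 : k = (k./2).*2.+1 by rewrite -[k in LHS]odd_double_half ok.
  move: (k./2) Hk2 => h Hk2.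
  have Hang : ang i = ang j by rewrite /ang (ecd_odd HD Eij Hk ok).
  have HUt : cheb (- (2%:R * cos phi)) 1 h.+1 = cheb (- (2%:R * cos phi)) 1 h :> R.
    apply: (mulfI sphi); rewrite !HS.
    have -> : phi *+ h.+1 = pi *+ 2 - phi *+ h by rewrite /phi Hk2 phi_odd.
    by rewrite sin_2piB !exprS; ring.
  have Hzw : zeI (enum_rank j) = w by rewrite /zeI enum_rankK /zeta /w Hang expr2.
  rewrite Hzw; apply: (mulIf w0).
  by rewrite HU -mulrA HU HUt exprS mulrA.
have Hk2 : k = (k./2).*2 by rewrite -[k in LHS]odd_double_half (negbTE ok).
move: (k./2) Hk2 => h Hk2.
have h0 : (0 < h)%N by move: k3; rewrite Hk2; case: (h).
have HUt : cheb (- (2%:R * cos phi)) 1 h = 0 :> R.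
  apply: (mulfI sphi); rewrite HS mulr0.
  by rewrite /phi Hk2 phi_even // sinpi mulr0.
suff -> : cheb (w * RC (- (2%:R * cos phi))) (w ^+ 2) h = 0 by rewrite mulr0.
by apply: (mulIf w0); rewrite HU HUt rmorph0 !mulr0 mul0r.
Qed.



Local Notation reflI := (refl alI zeI).
Local Notation evI := (@ev R n).

Definition lett (l : letter I) : 'M[C]_n :=
  if l.2 then reflI (enum_rank l.1)
  else iter (p l.1).-1 (mulmx (reflI (enum_rank l.1))) 1%:M.
Definition rho (w : word I) : 'M[C]_n := foldr (fun l M => lett l *m M) 1%:M w.

Lemma rho_cat w1 w2 : rho (w1 ++ w2) = rho w1 *m rho w2.
Proof. by elim: w1 => [|l w IH] /=; [rewrite mul1mx | rewrite IH mulmxA]. Qed.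

Lemma iter_mulmx (A B : 'M[C]_n) k : iter k (mulmx A) B = iter k (mulmx A) 1%:M *m B.
Proof. by elim: k => [|k IH] /=; [rewrite mul1mx | rewrite IH mulmxA]. Qed.

Lemma iter_mulmxC (A : 'M[C]_n) k : iter k (mulmx A) 1%:M *m A = iter k.+1 (mulmx A) 1%:M.
Proof.
elim: k => [|k IH]; first by rewrite /= mul1mx mulmx1.
by rewrite iterS -mulmxA IH.
Qed.

Lemma zeta_pow (i : I) : zeta i ^+ p i = 1.
Proof.
rewrite /zeta -exprM expiMn.
suff -> : ang i *+ (2 * p i) = pi *+ 2 by exact: expi2pi.
have hp : (p i)%:R != 0 :> R by rewrite gt_eqF ?p_gt0R.
rewrite /ang -(mulr_natr (pi / _)) -(mulr_natr pi) natrM; field; exact: hp.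
Qed.

Lemma al_diagI a : alI a a = 1.
Proof. exact: alpha_diag. Qed.

Lemma al_symI a b : alI a b = alI b a.
Proof. exact: alpha_sym. Qed.

Lemma E2 a : (evI a *m rowG alI a) *m (evI a *m rowG alI a) = evI a *m rowG alI a.
Proof.
rewrite mulmxA -[evI a *m rowG alI a *m evI a]mulmxA [rowG alI a *m evI a]mx11_scalar.
rewrite -/(phi alI a (evI a)) phi_ev al_diagI rmorph1 mul_mx_scalar scale1r //.
Qed.

Lemma refl_iter a k :
  iter k (mulmx (reflI a)) 1%:M = 1%:M + (zeI a ^+ k - 1) *: (evI a *m rowG alI a).
Proof.
elim: k => [|k IH]; first by rewrite /= expr0 subrr scale0r addr0.
rewrite iterS IH reflD.
move: (evI a *m rowG alI a) (E2 a) => E HE.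
rewrite mulmxDl mul1mx !mulmxDr mulmx1 -scalemxAl -!scalemxAr scalerA HE.
apply/matrixP => x y; rewrite !mxE exprS; ring.
Qed.

Lemma refl_pow_p (i : I) : iter (p i) (mulmx (reflI (enum_rank i))) 1%:M = 1%:M.
Proof. by rewrite refl_iter /zeI enum_rankK zeta_pow subrr scale0r addr0. Qed.

Lemma rho_nseq (i : I) k : rho (nseq k (i, true)) = iter k (mulmx (reflI (enum_rank i))) 1%:M.
Proof. by elim: k => //= k ->. Qed.

Lemma prodwS (i j : I) k : prodw i j k.+1 = (i, true) :: prodw j i k.
Proof.
rewrite /prodw /mkseq /= -[1%N]/(1 + 0)%N iotaDl -map_comp; congr (_ :: _).
by apply: eq_map => s /=; case: (odd s).
Qed.

Lemma rho_prodw (i j : I) k : rho (prodw i j k) = alt alI zeI (enum_rank i) (enum_rank j) k.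
Proof. by elim: k i j => [|k IH] i j //; rewrite prodwS /= IH. Qed.

Lemma mlab_sym (i j : I) : mlab e m i j = mlab e m j i.
Proof.
rewrite /mlab (ecd_sym HD i j); case E: (e j i) => //.
by rewrite (ecd_msym HD E).
Qed.

Lemma rho_basic x y : shep_basic e p m x y -> rho x = rho y.
Proof.
case=> [i b|i|i j k ij Hk].
- have hp := p_gt0 i.
  case: b => /=; rewrite /lett /= mulmx1.
    by rewrite -iterS prednK // refl_pow_p.
  by rewrite iter_mulmxC prednK // refl_pow_p.
- by rewrite rho_nseq refl_pow_p.
- rewrite !rho_prodw.
  have C1 := braid_cond ij Hk.
  have ji : j != i by rewrite eq_sym.
  have C2 := braid_cond ji (etrans (mlab_sym j i) Hk).
  move: C1 C2; set h := k./2; case: (boolP (odd k)) => ok C1 C2.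
    have Hk2 : k = h.*2.+1 by rewrite /h -[k in LHS]odd_double_half ok.
    rewrite Hk2; exact: (braid_odd al_diagI al_symI C1 C2).
  have Hk2 : k = h.*2 by rewrite /h -[k in LHS]odd_double_half (negbTE ok).
  rewrite Hk2; exact: (braid_even al_diagI al_symI C1 C2).
Qed.

Lemma rho_eq x y : shep_eq e p m x y -> rho x = rho y.
Proof.
elim=> [w|w1 w2 _ IH|w1 w2 w3 _ IH1 _ IH2|u v x' y' Hb] //.
- by rewrite IH1 IH2.
- by rewrite !rho_cat (rho_basic Hb).
Qed.



Section Average.
Variable ws : seq (word I).
Hypothesis Hws : forall w : word I, exists2 w', w' \in ws & shep_eq e p m w w'.

Definition Sg : seq 'M[C]_n := undup (map rho ws).

Lemma rho_in_S w : rho w \in Sg.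
Proof.
have [w' Hin Heq] := Hws w.
by rewrite (rho_eq Heq) mem_undup; apply: map_f.
Qed.

Lemma S_uniq : uniq Sg. Proof. exact: undup_uniq. Qed.

Lemma lett_val a : lett (enum_val a, true) = reflI a.
Proof. by rewrite /lett /= enum_valK. Qed.

Lemma S_closed a g : g \in Sg -> g *m reflI a \in Sg.
Proof.
rewrite mem_undup => /mapP [w _ ->].
have -> : rho w *m reflI a = rho (w ++ [:: (enum_val a, true)]).
  by rewrite rho_cat /= lett_val mulmx1.
exact: rho_in_S.
Qed.

Lemma refl_inj a : injective (fun g : 'M[C]_n => g *m reflI a).
Proof.
move=> g g' /= H.
have Hp := refl_pow_p (enum_val a); rewrite enum_valK in Hp.
have hp := p_gt0 (enum_val a).
rewrite -(prednK hp) iterS in Hp.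
by rewrite -[g]mulmx1 -[g']mulmx1 -Hp !mulmxA H.
Qed.

Lemma S_perm a : perm_eq Sg (map (fun g => g *m reflI a) Sg).
Proof.
have U1 : uniq (map (fun g => g *m reflI a) Sg) by rewrite (map_inj_uniq (@refl_inj a)) S_uniq.
have Hsub : {subset map (fun g => g *m reflI a) Sg <= Sg}.
  by move=> x /mapP [g Hg ->]; exact: S_closed.
have Hsz : (size Sg <= size (map (fun g => g *m reflI a) Sg))%N by rewrite size_map.
have [_ E] := uniq_min_size U1 Hsub Hsz.
apply: uniq_perm; [exact: S_uniq | exact: U1 | by move=> x; rewrite E].
Qed.

Definition Kf (v w : 'cV[C]_n) : C :=
  \sum_(g <- Sg) \sum_l Num.conj ((g *m v) l 0) * (g *m w) l 0.

Lemma Kf_inv a v w : Kf (reflI a *m v) (reflI a *m w) = Kf v w.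
Proof.
rewrite /Kf [RHS](perm_big _ (S_perm a)) big_map.
by apply: eq_bigr => g _; rewrite !mulmxA.
Qed.

Lemma KfZl c v w : Kf (c *: v) w = Num.conj c * Kf v w.
Proof.
rewrite /Kf mulr_sumr; apply: eq_bigr => g _; rewrite mulr_sumr; apply: eq_bigr => l _.
rewrite -scalemxAr.
have -> : (c *: (g *m v)) l 0 = c * (g *m v) l 0 by rewrite mxE.
by rewrite rmorphM mulrA.
Qed.

Lemma KfZr c v w : Kf v (c *: w) = c * Kf v w.
Proof.
rewrite /Kf mulr_sumr; apply: eq_bigr => g _; rewrite mulr_sumr; apply: eq_bigr => l _.
rewrite -scalemxAr.
have -> : (c *: (g *m w)) l 0 = c * (g *m w) l 0 by rewrite mxE.
by rewrite mulrCA.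
Qed.

Lemma KfDl v1 v2 w : Kf (v1 + v2) w = Kf v1 w + Kf v2 w.
Proof.
rewrite /Kf -big_split; apply: eq_bigr => g _; rewrite -big_split; apply: eq_bigr => l _.
rewrite mulmxDr.
have -> : (g *m v1 + g *m v2) l 0 = (g *m v1) l 0 + (g *m v2) l 0 by rewrite mxE.
by rewrite rmorphD mulrDl.
Qed.

Lemma KfDr v w1 w2 : Kf v (w1 + w2) = Kf v w1 + Kf v w2.
Proof.
rewrite /Kf -big_split; apply: eq_bigr => g _; rewrite -big_split; apply: eq_bigr => l _.
rewrite mulmxDr.
have -> : (g *m w1 + g *m w2) l 0 = (g *m w1) l 0 + (g *m w2) l 0 by rewrite mxE.
by rewrite mulrDr.
Qed.

Lemma Kf0l w : Kf 0 w = 0.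
Proof. by rewrite -(scale0r 0) KfZl rmorph0 mul0r. Qed.

Lemma Kf0r v : Kf v 0 = 0.
Proof. by rewrite -(scale0r 0) KfZr mul0r. Qed.

Lemma Kf_herm v w : Kf w v = Num.conj (Kf v w).
Proof.
rewrite /Kf rmorph_sum; apply: eq_bigr => g _; rewrite rmorph_sum; apply: eq_bigr => l _.
by rewrite rmorphM /= conjCK mulrC.
Qed.

Lemma Kf_suml h (F : 'I_h -> 'cV[C]_n) w : Kf (\sum_(a < h) F a) w = \sum_(a < h) Kf (F a) w.
Proof. exact: (big_morph (fun v => Kf v w) (fun v1 v2 => KfDl v1 v2 w) (Kf0l w)). Qed.

Lemma Kf_sumr h (F : 'I_h -> 'cV[C]_n) v : Kf v (\sum_(a < h) F a) = \sum_(a < h) Kf v (F a).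
Proof. exact: (big_morph (fun w => Kf v w) (fun w1 w2 => KfDr v w1 w2) (Kf0r v)). Qed.

Lemma colsum (v : 'cV[C]_n) : v = \sum_(a < n) v a 0 *: evI a.
Proof.
rewrite {1}(matrix_sum_delta v); apply: eq_bigr => a _.
by rewrite big_ord1.
Qed.

Lemma Kf_expand v w :
  Kf v w = \sum_(a < n) \sum_(b < n) Num.conj (v a 0) * w b 0 * Kf (evI a) (evI b).
Proof.
rewrite {1}(colsum v) {1}(colsum w) Kf_suml; apply: eq_bigr => a _.
rewrite KfZl Kf_sumr mulr_sumr; apply: eq_bigr => b _.
by rewrite KfZr mulrA.
Qed.

Lemma one_in_S : 1%:M \in Sg.
Proof. exact: (rho_in_S [::]). Qed.

Lemma Kf_ge0 v : 0 <= Kf v v.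
Proof.
apply: sumr_ge0 => g _; apply: sumr_ge0 => l _.
by rewrite mulrC mul_conjC_ge0.
Qed.

Lemma Kf_gt0 v : v != 0 -> 0 < Kf v v.
Proof.
move=> v0.
have [l0 Hl0] : exists l0, v l0 0 != 0.
  apply/existsP; apply: contraR v0 => /existsPn H.
  by apply/eqP/matrixP => i j; rewrite ord1 mxE; apply/eqP; exact: negbNE (H i).
rewrite /Kf (bigD1_seq _ one_in_S S_uniq) /=.
apply: ltr_wpDr; first by apply: sumr_ge0 => g _; apply: sumr_ge0 => l _; rewrite mulrC mul_conjC_ge0.
rewrite (bigD1 l0) //=; apply: ltr_wpDr.
  by apply: sumr_ge0 => l _; rewrite mulrC mul_conjC_ge0.
by rewrite mul1mx mulrC mul_conjC_gt0.
Qed.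

Lemma refl_ev a : reflI a *m evI a = zeI a *: evI a.
Proof.
rewrite reflE phi_ev al_diagI rmorph1 mulr1.
by rewrite -{1}(scale1r (evI a)) -scalerDl addrC subrK.
Qed.

Lemma zeI_neq1 a : Num.conj (zeI a) != 1.
Proof.
apply/eqP => H.
have H1 : zeI a = 1 by rewrite -[zeI a]conjCK H rmorph1.
have := zeta_sub1_neq0 (sin_ang_gt0 (enum_val a)).
by rewrite -/(zeta _) -/(zeI a) H1 subrr eqxx.
Qed.

Lemma Kf_row a b : Kf (evI a) (evI b) = RC (alI a b) * Kf (evI a) (evI a).
Proof.
set v := evI b - RC (alI a b) *: evI a.
have Hv : reflI a *m v = v.
  rewrite reflE /v phiD -scaleN1r phiZ phiZ !phi_ev al_diagI rmorph1.
  by rewrite mulr1 mulN1r subrr mulr0 scale0r addr0.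
have H : Kf (evI a) v = Num.conj (zeI a) * Kf (evI a) v.
  by rewrite -{1}(Kf_inv a) Hv refl_ev KfZl.
have H0 : Kf (evI a) v = 0.
  have : (1 - Num.conj (zeI a)) * Kf (evI a) v = 0 by rewrite mulrBl mul1r -H subrr.
  move/eqP; rewrite mulf_eq0 subr_eq0 eq_sym (negbTE (zeI_neq1 a)) /=.
  by move/eqP.
move: H0; rewrite /v KfDr -scaleN1r KfZr KfZr.
by move/eqP; rewrite mulN1r subr_eq0 => /eqP.
Qed.

Lemma conjRC (x : R) : Num.conj (RC x) = RC x.
Proof. by apply: conj_Creal; rewrite complex_real. Qed.

Lemma conjRCM (x : R) (y : C) : Num.conj (RC x * y) = RC x * Num.conj y.
Proof. by rewrite rmorphM; congr (_ * _); exact: conjRC. Qed.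

Definition reC (c : C) : R := let: Complex a _ := c in a.

Lemma pos_RC (c : C) : 0 < c -> c = RC (reC c) /\ 0 < reC c.
Proof. by case: c => a b; rewrite ltcE /= => /andP [/eqP -> ha]. Qed.

Lemma ev_neq0 a : evI a != 0.
Proof.
apply/eqP => /matrixP /(_ a 0); rewrite !mxE !eqxx /= => /eqP.
by rewrite oner_eq0.
Qed.

Lemma final (z : I -> C) : (exists i, z i != 0) -> 0 < @herm_form R I e p m z.
Proof.
move=> [i0 Hi0].
pose c a := Kf (evI a) (evI a).
have cpos a : 0 < c a by apply: Kf_gt0; exact: ev_neq0.
pose r a := reC (c a).
have cE a : c a = RC (r a) by have [] := pos_RC (cpos a).
have rpos a : 0 < r a by have [] := pos_RC (cpos a).
have cconj a : Num.conj (c a) = c a by rewrite cE conjRC.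
pose d a := Num.sqrt (r a).
have dpos a : 0 < d a by rewrite sqrtr_gt0.
have d0 a : RC (d a) != 0.
  by rewrite -(rmorph0 (real_complex R)) (inj_eq (@complexI R)) gt_eqF.
have Kab a b : Kf (evI a) (evI b) = RC (alI a b) * RC (d a * d b).
  case: (eqVneq (alI a b) 0) => [H0|Hab]; first by rewrite Kf_row H0 rmorph0 !mul0r.
  have Hc : c b = c a.
    have H1 := Kf_row a b; have H2 := Kf_row b a.
    rewrite Kf_herm H1 conjRCM -/(c a) -/(c b) (al_symI b a) cconj in H2.
    have : RC (alI a b) * (c b - c a) = 0 by rewrite mulrBr -H2 subrr.
    move/eqP; rewrite mulf_eq0 subr_eq0.
    rewrite -(rmorph0 (real_complex R)) (inj_eq (@complexI R)) (negbTE Hab) /=.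
    by move/eqP.
  have Hd : d b = d a by rewrite /d /r Hc.
  rewrite Kf_row -/(c a) Hd -expr2 sqr_sqrtr ?(ltW (rpos a)) //.
  by rewrite cE.
pose Y : 'cV[C]_n := \col_a (z (enum_val a) / RC (d a)).
have Y0 : Y != 0.
  apply/eqP => /matrixP /(_ (enum_rank i0) 0); rewrite !mxE enum_rankK => /eqP.
  by rewrite mulf_eq0 invr_eq0 (negbTE Hi0) (negbTE (d0 _)).
have := Kf_gt0 Y0; rewrite Kf_expand.
suff -> : @herm_form R I e p m z =
  \sum_(a < n) \sum_(b < n) Num.conj (Y a 0) * Y b 0 * Kf (evI a) (evI b) by [].
rewrite /herm_form (reindex _ (onW_bij _ (@enum_val_bij I))).
apply: eq_bigr => a _.
rewrite (reindex _ (onW_bij _ (@enum_val_bij I))).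
apply: eq_bigr => b _.
rewrite Kab !mxE rmorphM /= fmorphV /= conjRC /alI.
have -> : RC (d a * d b) = RC (d a) * RC (d b) by exact: rmorphM.
have := d0 a; have := d0 b.
move: (RC (d a)) (RC (d b)) => Da Db Da0 Db0.
by field; rewrite Da0 Db0.
Qed.




End Average.

End Main.

Theorem proposition2p2 (R : realType) (I : finType) (e : rel I)
    (p : I -> nat) (m : I -> I -> option nat) :
  ext_coxeter_diagram e p m ->
  shephard_finite e p m ->
  herm_pos_def R e p m.
Proof.
move=> HD [ws Hws] z Hz.
exact: (final HD Hws Hz).
Qed.
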